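(* Let $a=(a_1,\ldots,a_n)$ be a vector of positive integers and $d$ a positive integer with $a([n])=a_1+\cdots+a_n>d$, and let $I=I_{a,d}\subseteq S=K[x_1,\ldots,x_n]$ be the ideal of Veronese type. Let $k_0$ be the least positive integer $k$ such that $k(a([n])-d)\ge n-1$. Then the following are equivalent: (1) $\mathrm{Soc}(I)$ is equi-generated; (2) $\mathrm{Soc}^*(I)$ is equi-generated; (3) for every subset $A\subseteq[n]$ with $a(A)>d$ one has $k_0(a(A)-d)\ge|A|-1$.
   Context: $K$ is a field and $\mathfrak{m}=(x_1,\ldots,x_n)$. The ideal of Veronese type $I_{a,d}$ is generated by all monomials $x_1^{u_1}\cdots x_n^{u_n}$ of degree $d$ with $u_i\le a_i$ for all $i$. For $A\subseteq[n]$, $a(A)=\sum_{i\in A}a_i$. $\mathrm{Soc}(I)=\bigoplus_{m\ge0}(I^m:\mathfrak{m})/I^m$ is a graded module over the fiber cone $\mathcal{F}(I)=\bigoplus_{m\ge0}I^m/\mathfrak{m}I^m$ with $(I^m:\mathfrak{m})/I^m$ in degree $m$. For $m\ge1$, $\mathrm{soc}(I^m)$ is the ideal generated by the monomials $w$ of degree $md-1$ with $x_iw\in I^m$ for all $i$, and $\mathrm{Soc}^*(I)=\bigoplus_{m\ge1}\mathrm{soc}(I^m)$ is a graded module over the Rees ring $R(I)=\bigoplus_{m\ge0}I^m$ with $\mathrm{soc}(I^m)$ in degree $m$. A finitely generated graded module $M$ is equi-generated if it is generated by homogeneous elements of degree $\min\{i: M_i\neq0\}$. *)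

(* Defs.v *)
From mathcomp Require Import all_boot all_algebra.
From mathcomp Require Import mpoly.
Set Implicit Arguments. Unset Strict Implicit. Unset Printing Implicit Defensive.
Import GRing.Theory.
Local Open Scope ring_scope.

Section Ideals.
Variables (K : fieldType) (n : nat).
Local Notation S := {mpoly K[n]}.

Definition ideal_gen (G : S -> Prop) : S -> Prop :=
  fun p => exists s : seq (S * S),
    (forall x, x \in s -> G x.2) /\ p = \sum_(x <- s) x.1 * x.2.

Definition ideal_unit : S -> Prop := fun _ => True.
Definition ideal_add (J L : S -> Prop) : S -> Prop :=
  fun p => exists f g, J f /\ L g /\ p = f + g.
Definition ideal_mul (J L : S -> Prop) : S -> Prop :=
  ideal_gen (fun p => exists f g, J f /\ L g /\ p = f * g).
Definition ideal_pow (J : S -> Prop) (m : nat) : S -> Prop :=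
  iter m (ideal_mul J) ideal_unit.
Definition colon_max (J : S -> Prop) : S -> Prop :=
  fun f => forall i : 'I_n, J ('X_i * f).

Definition veronese_ideal (a : 'I_n -> nat) (d : nat) : S -> Prop :=
  ideal_gen (fun p => exists u : 'X_{1..n},
    p = 'X_[u] /\ mdeg u = d /\ forall i, (u i <= a i)%N).

(* Soc(I) = (+)_{m>=0} (I^m : m)/I^m as graded F(I)-module *)
Definition Soc_nonzero (I : S -> Prop) (m : nat) : Prop :=
  exists f, colon_max (ideal_pow I m) f /\ ~ ideal_pow I m f.
(* the graded F(I)-submodule generated by the degree-m0 part equals Soc(I):
   in degree m it is (I^(m-m0) (I^m0 : m) + I^m)/I^m *)
Definition Soc_generated_in (I : S -> Prop) (m0 : nat) : Prop :=
  forall m, (m0 <= m)%N -> forall f, colon_max (ideal_pow I m) f ->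
    ideal_add (ideal_mul (ideal_pow I (m - m0)) (colon_max (ideal_pow I m0)))
              (ideal_pow I m) f.

(* soc(I^m), m >= 1, for I equigenerated in degree d *)
Definition soc_pow (I : S -> Prop) (d m : nat) : S -> Prop :=
  ideal_gen (fun p => exists w : 'X_{1..n},
    p = 'X_[w] /\ mdeg w = (m * d - 1)%N /\
    forall i : 'I_n, ideal_pow I m ('X_i * 'X_[w])).
(* Soc*(I) = (+)_{m>=1} soc(I^m) as graded R(I)-module *)
Definition SocStar_nonzero (I : S -> Prop) (d m : nat) : Prop :=
  exists f, soc_pow I d m f /\ f != 0.
Definition SocStar_generated_in (I : S -> Prop) (d m0 : nat) : Prop :=
  forall m, (m0 <= m)%N -> forall f, soc_pow I d m f ->
    ideal_mul (ideal_pow I (m - m0)) (soc_pow I d m0) f.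

End Ideals.

(* a graded module with components indexed by degrees >= lo, given by
   "component i is nonzero" and "generated by component m0", is
   equi-generated if it is generated in degree min{i : M_i <> 0} *)
Definition equi_generated (lo : nat) (nz gen : nat -> Prop) : Prop :=
  forall m0, (lo <= m0)%N -> nz m0 ->
    (forall i, (lo <= i < m0)%N -> ~ nz i) -> gen m0.

Definition aA (n : nat) (a : 'I_n -> nat) (A : {set 'I_n}) : nat :=
  (\sum_(i in A) a i)%N.

(* Main.v *)
Require Import Defs.
From mathcomp Require Import all_boot all_algebra.
From mathcomp Require Import mpoly.
From mathcomp Require Import zify.
From Stdlib Require Import Classical.

Module Aux.
Set Implicit Arguments. Unset Strict Implicit. Unset Printing Implicit Defensive.
Import GRing.Theory.

Section Mon.
Local Open Scope ring_scope.
Variables (K : fieldType) (n : nat).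
Local Notation S := {mpoly K[n]}.
Local Notation mono := 'X_{1..n}.

Definition Pm (M : mono -> Prop) (p : S) := forall u, u \in msupp p -> M u.
Definition monI (J : S -> Prop) (M : mono -> Prop) := forall p, J p <-> Pm M p.
Definition Up (M : mono -> Prop) := forall u v, M u -> (u <= v)%MM -> M v.

Lemma Pm0 M : Pm M 0.
Proof. by move=> u; rewrite msupp0. Qed.

Lemma PmD M p q : Pm M p -> Pm M q -> Pm M (p + q).
Proof. by move=> hp hq u /msuppD_le; rewrite mem_cat => /orP [/hp|/hq]. Qed.

Lemma PmX M c u : M u -> Pm M (c *: 'X_[u]).
Proof. by move=> hu v /msuppZ_le; rewrite msuppX mem_seq1 => /eqP ->. Qed.

Lemma PmXiff M u : Pm M 'X_[u] <-> M u.
Proof.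
split; first by move=> h; apply: h; rewrite msuppX mem_seq1.
by move=> hu v; rewrite msuppX mem_seq1 => /eqP ->.
Qed.

Lemma PmM M p q : Up M -> Pm M p -> Pm M (q * p).
Proof.
move=> hU hp u /msuppM_le /allpairsP [[m1 m2] /= [_ h2 ->]].
by apply: hU (hp _ h2) _; apply: lem_addl.
Qed.

Lemma Pm_ind M (P : S -> Prop) : P 0 -> (forall p q, P p -> P q -> P (p+q)) ->
  (forall c u, M u -> P (c *: 'X_[u])) -> forall p, Pm M p -> P p.
Proof.
move=> P0 PD PX p Hp; rewrite /Pm in Hp; rewrite (mpolyE p).
elim: (msupp p) Hp => [|u r IH] Hp; first by rewrite big_nil.
rewrite big_cons; apply: PD; first by apply: PX; apply: Hp; exact: mem_head.
by apply: IH => v hv; apply: Hp; rewrite in_cons hv orbT.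
Qed.

Lemma monI_X J M u : monI J M -> J 'X_[u] <-> M u.
Proof. by move=> h; rewrite h PmXiff. Qed.

Lemma monI_ext J M M' : monI J M -> (forall u, M u <-> M' u) -> monI J M'.
Proof.
move=> h e p; rewrite h; split=> H u hu; first by apply/e; apply: H.
by apply/e; apply: H.
Qed.

Section Gen.
Variable G : S -> Prop.
Lemma gen0 : ideal_gen G 0.
Proof. by exists [::]; split=> //; rewrite big_nil. Qed.
Lemma genD p q : ideal_gen G p -> ideal_gen G q -> ideal_gen G (p + q).
Proof.
move=> [s1 [h1 ->]] [s2 [h2 ->]]; exists (s1 ++ s2); split; last by rewrite big_cat.
by move=> x; rewrite mem_cat => /orP [/h1|/h2].
Qed.
Lemma genM q p : ideal_gen G p -> ideal_gen G (q * p).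
Proof.
move=> [s [h ->]]; exists [seq (q * x.1, x.2) | x <- s]; split.
  by move=> x /mapP [y hy ->] /=; apply: h.
by rewrite big_map mulr_sumr; apply: eq_bigr => x _; rewrite mulrA.
Qed.
Lemma genG g : G g -> ideal_gen G g.
Proof.
move=> hg; exists [:: (1, g)]; split; first by move=> x; rewrite mem_seq1 => /eqP ->.
by rewrite big_seq1 mul1r.
Qed.
End Gen.

Definition UG (G : mono -> Prop) := fun v => exists2 u, G u & (u <= v)%MM.

Lemma UG_up G : Up (UG G).
Proof. move=> u v [w hw hwu] huv; exists w => //; exact: lepm_trans hwu huv. Qed.

Lemma XsubM (u v : mono) : (u <= v)%MM -> 'X_[v] = 'X_[v - u] * 'X_[u] :> S.
Proof. by move=> h; rewrite -mpolyXD submK. Qed.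

Lemma gen_mon (G : mono -> Prop) :
  monI (ideal_gen (fun p => exists u, p = 'X_[u] /\ G u)) (UG G).
Proof.
move=> p; split.
  move=> [s [hs ->]]; elim: s hs => [|x s IH] hs; first by rewrite big_nil; apply: Pm0.
  rewrite big_cons; apply: PmD; last by apply: IH => y hy; apply: hs; rewrite in_cons hy orbT.
  have [u [-> hu]] := hs x (mem_head _ _).
  apply: PmM; first exact: UG_up.
  by apply/PmXiff; exists u => //; apply: lepm_refl.
apply: Pm_ind; [exact: gen0 | by move=> ? ?; apply: genD |].
move=> c u [w hw hwu]; rewrite (XsubM hwu) -mul_mpolyC mulrA; apply: genM; apply: genG.
by exists w.
Qed.

Lemma unit_mon : monI (@ideal_unit K n) (fun _ => True).
Proof. by move=> p; split. Qed.

Definition Msum (M1 M2 : mono -> Prop) := fun u =>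
  exists u1 u2, [/\ M1 u1, M2 u2 & (u1 + u2 <= u)%MM].

Lemma mul_mon J L M1 M2 : monI J M1 -> monI L M2 ->
  monI (ideal_mul J L) (Msum M1 M2).
Proof.
move=> hJ hL p; split.
  move=> [s [hs ->]]; elim: s hs => [|x s IH] hs; first by rewrite big_nil; apply: Pm0.
  rewrite big_cons; apply: PmD; last by apply: IH => y hy; apply: hs; rewrite in_cons hy orbT.
  have [f [g [hf [hg ->]]]] := hs x (mem_head _ _).
  move=> u /msuppM_le /allpairsP [[m0 m'] /= [_ h2 ->]].
  move: h2 => /msuppM_le /allpairsP [[m1 m2] /= [h1 h2 ->]].
  exists m1, m2; split; [exact: (proj1 (hJ f) hf) | exact: (proj1 (hL g) hg)|].
  exact: lem_addl.
apply: Pm_ind; [exact: gen0 | by move=> ? ?; apply: genD |].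
move=> c u [u1 [u2 [h1 h2 h12]]]; rewrite (XsubM h12) -mul_mpolyC mulrA; apply: genM; apply: genG.
exists 'X_[u1], 'X_[u2]; split; first by apply/(monI_X _ hJ).
by split; [apply/(monI_X _ hL) | rewrite mpolyXD].
Qed.

Lemma add_mon J L M1 M2 : monI J M1 -> monI L M2 ->
  monI (ideal_add J L) (fun u => M1 u \/ M2 u).
Proof.
move=> hJ hL p; split.
  move=> [f [g [hf [hg ->]]]] u /msuppD_le; rewrite mem_cat => /orP [h|h].
    by left; apply: (proj1 (hJ f) hf).
  by right; apply: (proj1 (hL g) hg).
apply: Pm_ind.
- by exists 0, 0; split; [apply/hJ; apply: Pm0 | split; [apply/hL; apply: Pm0 | rewrite addr0]].
- move=> p1 p2 [f1 [g1 [h1 [h1' ->]]]] [f2 [g2 [h2 [h2' ->]]]].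
  exists (f1 + f2), (g1 + g2); split; first by apply/hJ; apply: PmD; apply/hJ.
  split; first by apply/hL; apply: PmD; apply/hL.
  by rewrite addrACA.
- move=> c u [h|h].
    exists (c *: 'X_[u]), 0; split; first by apply/hJ; apply: PmX.
    by split; [apply/hL; apply: Pm0 | rewrite addr0].
  exists 0, (c *: 'X_[u]); split; first by apply/hJ; apply: Pm0.
  by split; [apply/hL; apply: PmX | rewrite add0r].
Qed.

Lemma colon_mon J M : monI J M ->
  monI (colon_max J) (fun u => forall i : 'I_n, M (U_(i) + u)%MM).
Proof.
move=> hJ p; split.
  move=> h u hu i; have := proj1 (hJ _) (h i); apply.
  rewrite mulrC (perm_mem (msuppMX _ _)); apply/mapP; exists u => //.
move=> h i; apply/hJ => v; rewrite mulrC (perm_mem (msuppMX _ _)).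
by case/mapP => u hu ->; apply: h.
Qed.

End Mon.


Section Sums.
Variable n : nat.
Implicit Types f g h : 'I_n -> nat.

Lemma sum_le2 f g h : (forall i, f i + g i <= h i) ->
  \sum_i f i + \sum_i g i <= \sum_i h i.
Proof. by move=> H; rewrite -big_split; apply: leq_sum => i _; apply: H. Qed.

Lemma sum_eq2 f g h : (forall i, f i + g i = h i) ->
  \sum_i f i + \sum_i g i = \sum_i h i.
Proof. by move=> H; rewrite -big_split; apply: eq_bigr => i _; apply: H. Qed.

Lemma sum_eq22 f g h k : (forall i, f i + g i = h i + k i) ->
  \sum_i f i + \sum_i g i = \sum_i h i + \sum_i k i.
Proof. by move=> H; rewrite -!big_split; apply: eq_bigr => i _; apply: H. Qed.

Lemma sum_le22 f g h k : (forall i, f i + g i <= h i + k i) ->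
  \sum_i f i + \sum_i g i <= \sum_i h i + \sum_i k i.
Proof. by move=> H; rewrite -!big_split; apply: leq_sum => i _; apply: H. Qed.

Lemma sum_le f g : (forall i, f i <= g i) -> \sum_i f i <= \sum_i g i.
Proof. by move=> H; apply: leq_sum => i _; apply: H. Qed.

Lemma sum_mulc c f : \sum_i (c * f i) = c * \sum_i f i.
Proof. by rewrite big_distrr. Qed.

Lemma sum_pred1 (i0 : 'I_n) b : \sum_i ((i == i0) * b) = b.
Proof.
rewrite (bigD1 i0) //= eqxx mul1n big1 ?addn0 // => j /negbTE ->.
by rewrite mul0n.
Qed.

Lemma sum_const1 : \sum_(i < n) 1 = n.
Proof. by rewrite sum_nat_const card_ord muln1. Qed.

Lemma aA_ind (a : 'I_n -> nat) (A : {set 'I_n}) : aA a A = \sum_i ((i \in A) * a i).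
Proof. by rewrite /aA big_mkcond; apply: eq_bigr => i _; case: (i \in A); lia. Qed.

Lemma card_ind (A : {set 'I_n}) : #|A| = \sum_i (i \in A : nat).
Proof. by rewrite -sum1_card big_mkcond. Qed.

Lemma aT (a : 'I_n -> nat) : aA a [set: 'I_n] = \sum_i a i.
Proof. by rewrite aA_ind; apply: eq_bigr => i _; rewrite in_setT mul1n. Qed.

Lemma itv_sum (L U : 'I_n -> nat) s : (forall i, L i <= U i) ->
  \sum_i L i <= s -> s <= \sum_i U i ->
  exists v : 'I_n -> nat, (forall i, L i <= v i <= U i) /\ \sum_i v i = s.
Proof.
move=> hLU h1 h2.
suff H : forall k L, (forall i, L i <= U i) -> \sum_i L i + k = s ->
  exists v : 'I_n -> nat, (forall i, L i <= v i <= U i) /\ \sum_i v i = s.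
  by apply: (H (s - \sum_i L i) L hLU); lia.
elim=> [|k IH] L' hL hs.
  by exists L'; split; [move=> i; rewrite leqnn hL | lia].
case: (pickP (fun i => L' i < U i)) => [i hi | hn]; last first.
  have : \sum_i U i <= \sum_i L' i.
    by apply: sum_le => j; have := hn j; rewrite /= ltnNge => /negbFE.
  lia.
have hL2 : forall j, L' j + (j == i) <= U j.
  by move=> j; case: (eqVneq j i) => [->|]; rewrite ?addn1 ?addn0 //; apply: hL.
have hs2 : \sum_j (L' j + (j == i)) + k = s.
  have := sum_pred1 i 1; under eq_bigr do rewrite muln1.
  by rewrite big_split /= => ->; rewrite -hs addn1 addSn addnS.
have [v [hv hvs]] := IH _ hL2 hs2.
by exists v; split => // j; have := hv j; lia.
Qed.

End Sums.

Section Comb.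
Variables (n : nat) (a : 'I_n -> nat) (d : nat).
Local Notation mono := 'X_{1..n}.

Definition Mm m (u : mono) := exists v : mono,
  [/\ mdeg v = (m * d)%N, forall i, v i <= m * a i & (v <= u)%MM].
Definition Gm m (u : mono) := mdeg u = (m * d - 1)%N /\ forall i, u i < m * a i.
Definition Gen m m0 := forall u, Gm m u -> exists v w,
  [/\ Mm (m - m0) v, Gm m0 w & (v + w <= u)%MM].

Lemma mdeg_le (u v : mono) : (u <= v)%MM -> mdeg u <= mdeg v.
Proof. by move=> /mnm_lepP h; rewrite !mdegE; apply: sum_le. Qed.

Lemma le_eq_mdeg (u v : mono) : (u <= v)%MM -> mdeg u = mdeg v -> u = v.
Proof.
move=> h e; move: e; rewrite -(submK h) mdegD => e.
have /eqP : mdeg (v - u)%MM = 0%N by lia.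
by rewrite mdeg_eq0 => /eqP ->; rewrite add0m.
Qed.

Definition mk (f : 'I_n -> nat) : mono := [multinom f i | i < n].
Lemma mkE f i : mk f i = f i. Proof. exact: mnmE. Qed.
Lemma mdeg_mk f : mdeg (mk f) = \sum_i f i.
Proof. by rewrite mdegE; apply: eq_bigr => i _; rewrite mkE. Qed.

Lemma Mm_up m : forall u v, Mm m u -> (u <= v)%MM -> Mm m v.
Proof. by move=> u v [w [h1 h2 h3]] h; exists w; split => //; apply: lepm_trans h. Qed.

Lemma Mm_add p q x y : Mm p x -> Mm q y -> Mm (p + q) (x + y)%MM.
Proof.
move=> [v [h1 h2 h3]] [w [g1 g2 g3]]; exists (v + w)%MM; split.
- by rewrite mdegD h1 g1 mulnDl.
- by move=> i; rewrite mnmDE mulnDl; apply: leq_add.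
- apply/mnm_lepP => i; rewrite !mnmDE; apply: leq_add; by apply/mnm_lepP.
Qed.

Lemma Mm0 u : Mm 0 u.
Proof.
exists 0%MM; split; first by rewrite mdeg0.
  by move=> i; rewrite mnm0E.
by apply/mnm_lepP => i; rewrite mnm0E.
Qed.

Lemma Mm_sigma m u : Mm m u <-> m * d <= \sum_i minn (u i) (m * a i).
Proof.
split.
  move=> [v [h1 h2 /mnm_lepP h3]]; rewrite -h1 mdegE; apply: sum_le => i.
  by rewrite leq_min h2 h3.
move=> h.
have h0 : \sum_(i < n) (fun _ => 0) i <= m * d by rewrite big1.
have [v [hv hs]] := @itv_sum n (fun _ => 0) (fun i => minn (u i) (m * a i)) (m * d)
  (fun i => leq0n _) h0 h.
exists (mk v); split; first by rewrite mdeg_mk.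
  by move=> i; rewrite mkE; have := hv i; lia.
by apply/mnm_lepP => i; rewrite mkE; have := hv i; lia.
Qed.

End Comb.


Section Comb2.
Variables (n : nat) (a : 'I_n -> nat) (d : nat).
Local Notation mono := 'X_{1..n}.

Lemma decomp m (v : mono) : mdeg v = (m.+1 * d)%N -> (forall i, v i <= m.+1 * a i) ->
  exists v1 : mono, [/\ mdeg v1 = d, forall i, v1 i <= a i, (v1 <= v)%MM &
     forall i, (v - v1)%MM i <= m * a i].
Proof.
move=> hdeg hv.
have hLU : forall i, v i - m * a i <= minn (v i) (a i).
  by move=> i; have := hv i; rewrite mulSn; lia.
have hL : \sum_i (v i - m * a i) <= d.
  have e1 : \sum_i (v i - m * a i) <= \sum_i ((m * a i < v i) * a i).
    by apply: sum_le => i; have := hv i; rewrite mulSn; lia.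
  have e2 : \sum_i (v i - m * a i) + \sum_i (m * ((m * a i < v i) * a i)) <= \sum_i v i.
    by apply: sum_le2 => i; lia.
  rewrite sum_mulc -mdegE hdeg mulSn in e2.
  case: (leqP (\sum_i ((m * a i < v i) * a i)) d) => h; first lia.
  have : m * d <= m * \sum_i ((m * a i < v i) * a i) by rewrite leq_mul2l ltnW ?orbT.
  lia.
have hU : d <= \sum_i minn (v i) (a i).
  have e1 : \sum_i ((a i < v i) * a i) + \sum_i (~~ (a i < v i) * v i) = \sum_i minn (v i) (a i).
    by apply: sum_eq2 => i; case: ltnP; lia.
  have e2 : \sum_i ((a i < v i) * v i) + \sum_i (~~ (a i < v i) * v i) = \sum_i v i.
    by apply: sum_eq2 => i; case: ltnP; lia.
  have e3 : \sum_i ((a i < v i) * v i) <= \sum_i (m.+1 * ((a i < v i) * a i)).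
    by apply: sum_le => i; have := hv i; case: ltnP; lia.
  rewrite sum_mulc mulSn in e3; rewrite -mdegE hdeg mulSn in e2.
  case: (leqP d (\sum_i ((a i < v i) * a i))) => h; first lia.
  have : m * \sum_i ((a i < v i) * a i) <= m * d by rewrite leq_mul2l ltnW ?orbT.
  lia.
have [w [hw hws]] := itv_sum hLU hL hU.
have hwv : (mk w <= v)%MM by apply/mnm_lepP => i; rewrite mkE; have := hw i; lia.
exists (mk w); split => //.
- by rewrite mdeg_mk.
- by move=> i; rewrite mkE; have := hw i; lia.
- by move=> i; rewrite mnmBE mkE; have := hw i; lia.
Qed.


Definition G1 (u : mono) := mdeg u = d /\ forall i, u i <= a i.

Lemma Mm_succ m u : Msum (UG G1) (Mm a d m) u <-> Mm a d m.+1 u.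
Proof.
split.
  move=> [u1 [u2 [[g [hg1 hg2] hgu] [v [hv1 hv2 hv3]] h12]]].
  exists (g + v)%MM; split.
  - by rewrite mdegD hg1 hv1 mulSn.
  - by move=> i; rewrite mnmDE mulSn; apply: leq_add.
  - apply: lepm_trans h12; apply/mnm_lepP => i; rewrite !mnmDE.
    by apply: leq_add; apply/mnm_lepP.
move=> [v [hv1 hv2 hv3]].
have [v1 [h1 h2 h3 h4]] := decomp hv1 hv2.
exists v1, (v - v1)%MM; split.
- by exists v1; [split | apply: lepm_refl].
- exists (v - v1)%MM; split => //; last by apply: lepm_refl.
  by have := hv1; rewrite -{1}(submK h3) mdegD h1 mulSn; lia.
- by rewrite addmC submK.
Qed.

Lemma Gm_notM m u : 0 < m * d -> Gm a d m u -> ~ Mm a d m u.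
Proof.
move=> hmd [hu _] [v [hv1 _ hv3]]; have := mdeg_le hv3; lia.
Qed.

Lemma Gm_C m u : 0 < m * d -> Gm a d m u -> forall i, Mm a d m (U_(i) + u)%MM.
Proof.
move=> hmd [hu1 hu2] i; exists (U_(i) + u)%MM; split; last by apply: lepm_refl.
- by rewrite mdegD mdeg1 hu1; lia.
- by move=> j; rewrite mnmDE mnm1E; have := hu2 j; case: (i == j); lia.
Qed.


Lemma sigma_step m u i : \sum_j minn ((U_(i) + u)%MM j) (m * a j) <=
   \sum_j minn (u j) (m * a j) + (u i < m * a i).
Proof.
rewrite -[X in _ + X](sum_pred1 i).
rewrite -big_split /=; apply: sum_le => j; rewrite mnmDE mnm1E.
case: (eqVneq j i) => [->|hne]; rewrite ?eqxx /=; lia.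
Qed.

Lemma C_to m u (i0 : 'I_n) : 0 < m * d -> (forall i, Mm a d m (U_(i) + u)%MM) ->
  Mm a d m u \/ Gm a d m u.
Proof.
move=> hmd hC; case: (classic (Mm a d m u)) => hM; [by left | right].
have hs : \sum_j minn (u j) (m * a j) < m * d.
  by rewrite ltnNge; apply/negP => /Mm_sigma.
have hlt : forall i, u i < m * a i.
  move=> i; have := proj1 (Mm_sigma _ _ _ _) (hC i); have := sigma_step m u i.
  case: (u i < m * a i) => //; lia.
have e : \sum_j minn (u j) (m * a j) = mdeg u.
  by rewrite mdegE; apply: eq_bigr => j _; apply/minn_idPl/ltnW.
split => //.
have := proj1 (Mm_sigma _ _ _ _) (hC i0); have := sigma_step m u i0; lia.
Qed.

End Comb2.


Section Comb3.
Variables (n : nat) (a : 'I_n -> nat) (d : nat).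
Hypothesis ha : forall i, 0 < a i.
Hypothesis hd : 0 < d.
Local Notation mono := 'X_{1..n}.

Lemma nz_iff m : 0 < m -> d < \sum_i a i ->
  (exists u, Gm a d m u) <-> n - 1 <= m * (\sum_i a i - d).
Proof.
move=> hm hT.
have hmd : 0 < m * d by rewrite muln_gt0 hm hd.
have hmT : m * d <= m * \sum_i a i by rewrite leq_mul2l ltnW ?orbT.
have hma : forall i, 0 < m * a i by move=> i; rewrite muln_gt0 hm ha.
rewrite mulnBr; split.
  move=> [u [hu1 hu2]].
  have : \sum_i u i + \sum_(i < n) 1 <= \sum_i (m * a i).
    by apply: sum_le2 => i; have := hu2 i; lia.
  by rewrite sum_const1 sum_mulc -mdegE hu1; lia.
move=> h.
have e : \sum_i (m * a i - 1) + \sum_(i < n) 1 = \sum_i (m * a i).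
  by apply: sum_eq2 => i; have := hma i; lia.
rewrite sum_const1 sum_mulc in e.
have h0 : \sum_(i < n) (fun _ => 0) i <= m * d - 1 by rewrite big1.
have h1 : m * d - 1 <= \sum_i (m * a i - 1) by lia.
have [v [hv hvs]] := @itv_sum n (fun _ => 0) (fun i => m * a i - 1) _ (fun i => leq0n _) h0 h1.
exists (mk v); split; first by rewrite mdeg_mk.
by move=> i; rewrite mkE; have := hv i; have := hma i; lia.
Qed.


Definition cond3 k0 := forall A : {set 'I_n}, d < aA a A ->
  #|A| - 1 <= k0 * (aA a A - d).

Lemma gen_of_cond k0 m : 0 < k0 -> k0 <= m -> cond3 k0 -> Gen a d m k0.
Proof.
move=> hk0 hkm hc u [hu1 hu2].
set p := m - k0.
have hm : m = p + k0 by rewrite /p subnK.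
have hma : forall i, m * a i = p * a i + k0 * a i by move=> i; rewrite hm mulnDl.
have hmd : m * d = p * d + k0 * d by rewrite hm mulnDl.
have hka : forall i, 0 < k0 * a i by move=> i; rewrite muln_gt0 hk0 ha.
have hkd : 0 < k0 * d by rewrite muln_gt0 hk0 hd.
have hLU : forall i, (u i).+1 - k0 * a i <= minn (u i) (p * a i).
  by move=> i; have := hu2 i; have := hka i; rewrite hma; lia.
have hsu : \sum_i u i = m * d - 1 by rewrite -mdegE hu1.
have hU : p * d <= \sum_i minn (u i) (p * a i).
  have e1 : \sum_i (p * ((p * a i < u i) * a i)) + \sum_i (~~ (p * a i < u i) * u i)
      = \sum_i minn (u i) (p * a i).
    by apply: sum_eq2 => i; case: ltnP; lia.
  have e2 : \sum_i ((p * a i < u i) * u i) + \sum_i (~~ (p * a i < u i) * u i) = \sum_i u i.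
    by apply: sum_eq2 => i; case: ltnP; lia.
  have e3 : \sum_i ((p * a i < u i) * u i) <= \sum_i (m * ((p * a i < u i) * a i)).
    by apply: sum_le => i; have := hu2 i; case: ltnP; lia.
  rewrite !sum_mulc hm mulnDl in e1 e3.
  set aB := \sum_i ((p * a i < u i) * a i) in e1 e3.
  case: (leqP d aB) => h.
    have : p * d <= p * aB by rewrite leq_mul2l h orbT.
    lia.
  have : k0 * aB < k0 * d by rewrite ltn_pmul2l.
  lia.
have hL : \sum_i ((u i).+1 - k0 * a i) <= p * d.
  have e1 : \sum_i ((u i).+1 - k0 * a i) + \sum_i (k0 * ((k0 * a i <= u i) * a i))
      = \sum_i ((k0 * a i <= u i) * u i) + \sum_i (k0 * a i <= u i : nat).
    by apply: sum_eq22 => i; case: leqP; lia.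
  have e2 : \sum_i ((u i).+1 - k0 * a i) <= \sum_i (p * ((k0 * a i <= u i) * a i)).
    by apply: sum_le => i; have := hu2 i; rewrite hma; case: leqP; lia.
  have e3 : \sum_i ((k0 * a i <= u i) * u i) <= \sum_i u i.
    by apply: sum_le => i; case: leqP; lia.
  rewrite !sum_mulc in e1 e2.
  set aC := \sum_i ((k0 * a i <= u i) * a i) in e1 e2.
  set cC := \sum_i (k0 * a i <= u i : nat) in e1.
  case: (leqP aC d) => h.
    have : p * aC <= p * d by rewrite leq_mul2l h orbT.
    lia.
  pose A := [set i | k0 * a i <= u i].
  have eA : aA a A = aC by rewrite aA_ind; apply: eq_bigr => i _; rewrite inE.
  have cA : #|A| = cC by rewrite card_ind; apply: eq_bigr => i _; rewrite inE.
  have := hc A; rewrite eA cA mulnBr => /(_ h) hh.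
  have : k0 * d <= k0 * aC by rewrite leq_mul2l ltnW ?orbT.
  lia.
have [v [hv hvs]] := itv_sum hLU hL hU.
have hvu : (mk v <= u)%MM by apply/mnm_lepP => i; rewrite mkE; have := hv i; lia.
exists (mk v), (u - mk v)%MM; split.
- exists (mk v); split; [by rewrite mdeg_mk | | exact: lepm_refl].
  by move=> i; rewrite mkE; have := hv i; lia.
- split.
    have := hu1; rewrite -{1}(submK hvu) mdegD mdeg_mk hvs; lia.
  by move=> i; rewrite mnmBE mkE; have := hv i; have := hka i; have := hu2 i; lia.
- by rewrite addmC submK //; apply: lepm_refl.
Qed.

Lemma not_gen_of_not_cond k0 : 0 < k0 -> ~ cond3 k0 ->
  exists2 m, k0 <= m & ~ Gen a d m k0.
Proof.
move=> hk0 hc.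
have [A hA1 hA2] : exists2 A : {set 'I_n}, d < aA a A & ~ (#|A| - 1 <= k0 * (aA a A - d)).
  apply: NNPP => H; apply: hc => A h; apply: NNPP => h2; apply: H; by exists A.
set aC := aA a A in hA1 hA2; set cC := #|A| in hA2.
have eaC : aC = \sum_i ((i \in A) * a i) by rewrite /aC aA_ind.
have ecC : cC = \sum_i (i \in A : nat) by rewrite /cC card_ind.
set m := k0 * aC + cC + 1.
have hkm : k0 < m.
  have : k0 <= k0 * aC by rewrite leq_pmulr //; lia.
  rewrite /m; lia.
have hma : forall i, k0 * a i < m * a i by move=> i; rewrite ltn_pmul2r.
have hm0 : 0 < m by lia.
have hmd : m <= m * d by rewrite leq_pmulr.
have hmaC : m <= m * (aC - d) by rewrite leq_pmulr // subn_gt0.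
rewrite mulnBr in hmaC hA2.
have hLU : forall i, (i \in A) * (k0 * a i) <= (i \in A) * (m * a i - 1).
  by move=> i; have := hma i; case: (i \in A); lia.
have e1 : \sum_i ((i \in A) * (k0 * a i)) = k0 * aC.
  by rewrite eaC -sum_mulc; apply: eq_bigr => i _; lia.
have e2 : \sum_i ((i \in A) * (m * a i - 1)) + \sum_i (i \in A : nat) = \sum_i (m * ((i \in A) * a i)).
  by apply: sum_eq2 => i; have := hma i; case: (i \in A); lia.
rewrite sum_mulc -eaC -ecC in e2.
have hL : \sum_i ((i \in A) * (k0 * a i)) <= m * d - 1 by rewrite e1 /m; lia.
have hU : m * d - 1 <= \sum_i ((i \in A) * (m * a i - 1)) by lia.
have [w [hw hws]] := itv_sum hLU hL hU.
exists m; first exact: ltnW.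
move=> hG.
have hGm : Gm a d m (mk w).
  split; first by rewrite mdeg_mk.
  move=> i; rewrite mkE; have := hw i; have := hma i; case: (i \in A); lia.
have [v [w' [_ [hw1 hw2] hle]]] := hG _ hGm.
have e3 : \sum_i w' i + \sum_i (i \in A : nat) <= \sum_i (k0 * ((i \in A) * a i)).
  apply: sum_le2 => i; move/mnm_lepP: hle => /(_ i); rewrite mnmDE mkE.
  have := hw i; have := hw2 i; case: (i \in A); lia.
rewrite sum_mulc -eaC -ecC -mdegE hw1 in e3.
have : 0 < k0 * d by rewrite muln_gt0 hk0 hd.
lia.
Qed.

End Comb3.


Section Main.
Variables (K : fieldType) (n : nat) (a : 'I_n -> nat) (d : nat).
Hypothesis ha : forall i, 0 < a i.
Hypothesis hd : 0 < d.
Local Notation mono := 'X_{1..n}.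
Local Notation I := (@veronese_ideal K n a d).

Lemma lem_add2 (x y z t : mono) : (x <= y)%MM -> (z <= t)%MM -> (x + z <= y + t)%MM.
Proof.
move=> /mnm_lepP h1 /mnm_lepP h2; apply/mnm_lepP => i; rewrite !mnmDE.
exact: leq_add.
Qed.

Lemma ver_mon : monI I (UG (G1 a d)).
Proof. exact: (@gen_mon K n (G1 a d)). Qed.

Lemma pow_mon m : monI (ideal_pow I m) (Mm a d m).
Proof.
elim: m => [|m IH].
  apply: (monI_ext (@unit_mon K n)) => u; split=> // _; exact: Mm0.
apply: (monI_ext (mul_mon ver_mon IH)) => u; exact: Mm_succ.
Qed.

Lemma colon_pow_mon m : monI (colon_max (ideal_pow I m))
  (fun u => forall i : 'I_n, Mm a d m (U_(i) + u)%MM).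
Proof. exact: colon_mon (pow_mon m). Qed.

Lemma soc_gen_iff m (w : mono) : 0 < m * d ->
  (mdeg w = (m * d - 1)%N /\ forall i : 'I_n, ideal_pow I m ('X_i * 'X_[w]))
  <-> Gm a d m w.
Proof.
move=> hmd; split.
  move=> [hw1 hw2]; split => // i.
  have := hw2 i; rewrite -mpolyXD => /(monI_X _ (pow_mon m)) [v [hv1 hv2 hv3]].
  have e : v = (U_(i) + w)%MM.
    by apply: le_eq_mdeg => //; rewrite mdegD mdeg1 hw1 hv1; lia.
  by have := hv2 i; rewrite e mnmDE mnm1E eqxx.
move=> hG; split; first by case: hG.
move=> i; rewrite -mpolyXD; apply/(monI_X _ (pow_mon m)); exact: Gm_C.
Qed.

Lemma soc_mon m : 0 < m * d -> monI (soc_pow I d m) (UG (Gm a d m)).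
Proof.
move=> hmd.
apply: (monI_ext (@gen_mon K n (fun w => mdeg w = (m * d - 1)%N /\
   forall i : 'I_n, ideal_pow I m ('X_i * 'X_[w])))) => u.
split => [[w hw hwu]|[w hw hwu]]; exists w => //; by apply/soc_gen_iff.
Qed.

Lemma F5 m (i0 : 'I_n) : Soc_nonzero I m <-> 0 < m /\ exists u, Gm a d m u.
Proof.
split.
  move=> [f [hc hn]]; case: (posnP m) => [m0|mpos].
    by exfalso; apply: hn; rewrite m0.
  split => //.
  have hmd : 0 < m * d by rewrite muln_gt0 mpos hd.
  have hC := proj1 (colon_pow_mon m f) hc.
  have [u hu hnu] : exists2 u, u \in msupp f & ~ Mm a d m u.
    apply: NNPP => H; apply: hn; apply/(pow_mon m) => u hu.
    apply: NNPP => h; apply: H; by exists u.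
  case: (C_to i0 hmd (hC u hu)) => // hG; by exists u.
move=> [mpos [u hu]].
have hmd : 0 < m * d by rewrite muln_gt0 mpos hd.
exists 'X_[u]; split.
  by apply/(monI_X _ (colon_pow_mon m)); exact: Gm_C.
by move/(monI_X _ (pow_mon m)); apply: Gm_notM.
Qed.

Lemma F6 m : 0 < m -> SocStar_nonzero I d m <-> exists u, Gm a d m u.
Proof.
move=> mpos; have hmd : 0 < m * d by rewrite muln_gt0 mpos hd.
split.
  move=> [f [hf hnz]].
  have hC := proj1 (soc_mon hmd f) hf.
  case E: (msupp f) => [|u r].
    by move/eqP: E; rewrite msupp_eq0 (negbTE hnz).
  have hu : u \in msupp f by rewrite E mem_head.
  have [w hw _] := hC u hu.
  by exists w.
move=> [u hu]; exists 'X_[u]; split.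
  by apply/(monI_X _ (soc_mon hmd)); exists u => //; apply: lepm_refl.
apply/negP => /eqP h; have := msuppX K u; rewrite h msupp0 => //.
Qed.


Lemma F7 m0 : 0 < m0 ->
  SocStar_generated_in I d m0 <-> forall m, m0 <= m -> Gen a d m m0.
Proof.
move=> m0pos; have hm0d : 0 < m0 * d by rewrite muln_gt0 m0pos hd.
have hM m : monI (ideal_mul (ideal_pow I (m - m0)) (soc_pow I d m0))
   (Msum (Mm a d (m - m0)) (UG (Gm a d m0))).
  exact: mul_mon (pow_mon _) (soc_mon hm0d).
split.
  move=> hg m hm u hu.
  have hmd : 0 < m * d by rewrite muln_gt0 hd (leq_trans m0pos hm).
  have hX : soc_pow I d m 'X_[u].
    by apply/(monI_X _ (soc_mon hmd)); exists u => //; apply: lepm_refl.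
  have := hg m hm _ hX; move/(monI_X _ (hM m)) => [u1 [u2 [h1 [w hw hwu] h12]]].
  exists u1, w; split => //; apply: lepm_trans h12; apply: lem_add2 => //.
  exact: lepm_refl.
move=> hg m hm f hf.
have hmd : 0 < m * d by rewrite muln_gt0 hd (leq_trans m0pos hm).
apply/(hM m) => u hu.
have [w0 hw0 hw0u] := proj1 (soc_mon hmd f) hf u hu.
have [v [w [h1 h2 h3]]] := hg m hm w0 hw0.
exists v, w; split => //; last exact: lepm_trans hw0u.
by exists w => //; apply: lepm_refl.
Qed.

Lemma F8 m0 (i0 : 'I_n) : 0 < m0 ->
  Soc_generated_in I m0 <-> forall m, m0 <= m -> Gen a d m m0.
Proof.
move=> m0pos; have hm0d : 0 < m0 * d by rewrite muln_gt0 m0pos hd.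
have hM m := add_mon (mul_mon (pow_mon (m - m0)) (colon_pow_mon m0)) (pow_mon m).
split.
  move=> hg m hm u hu.
  have hmd : 0 < m * d by rewrite muln_gt0 hd (leq_trans m0pos hm).
  have hX : colon_max (ideal_pow I m) 'X_[u].
    by apply/(monI_X _ (colon_pow_mon m)); exact: Gm_C.
  have := hg m hm _ hX; move/(monI_X _ (hM m)) => [[u1 [u2 [h1 h2 h12]]]|h].
    case: (C_to i0 hm0d h2) => h2'.
      exfalso; apply: (Gm_notM hmd hu).
      apply: (Mm_up _ h12); have := Mm_add h1 h2'; by rewrite subnK.
    by exists u1, u2.
  by exfalso; apply: (Gm_notM hmd hu).
move=> hg m hm f hf.
have hmd : 0 < m * d by rewrite muln_gt0 hd (leq_trans m0pos hm).
apply/(hM m) => u hu.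
case: (C_to i0 hmd (proj1 (colon_pow_mon m f) hf u hu)) => h; first by right.
have [v [w [h1 h2 h3]]] := hg m hm u h.
left; exists v, w; split => //; exact: Gm_C.
Qed.

End Main.

Lemma equi_char lo (nz gen : nat -> Prop) k0 : lo <= k0 -> nz k0 ->
  (forall i, lo <= i -> i < k0 -> ~ nz i) -> (forall i, lo <= i -> nz i -> k0 <= i) ->
  (equi_generated lo nz gen <-> gen k0).
Proof.
move=> h1 h2 h3 h4; split.
  by move=> H; apply: H => // i /andP [hi1 hi2]; apply: h3.
move=> hg m0 hlo hnz hmin.
have hk := h4 _ hlo hnz.
case: (ltnP k0 m0) => h.
  by exfalso; apply: (hmin k0 _ h2); rewrite h1 h.
by have -> : m0 = k0 by apply/eqP; rewrite eqn_leq h hk.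
Qed.


End Aux.
Import Aux.

Theorem proposition3p8 (K : fieldType) (n : nat) (a : 'I_n -> nat) (d : nat)
  (ha : forall i, (0 < a i)%N) (hd : (0 < d)%N)
  (had : (d < aA a [set: 'I_n])%N)
  (k0 : nat) (hk0pos : (0 < k0)%N)
  (hk0 : (n - 1 <= k0 * (aA a [set: 'I_n] - d))%N)
  (hk0min : forall k, (0 < k)%N -> (n - 1 <= k * (aA a [set: 'I_n] - d))%N ->
     (k0 <= k)%N) :
  let I := @veronese_ideal K n a d in
  [/\ equi_generated 0 (Soc_nonzero I) (Soc_generated_in I)
       <-> equi_generated 1 (SocStar_nonzero I d) (SocStar_generated_in I d),
      equi_generated 1 (SocStar_nonzero I d) (SocStar_generated_in I d)
       <-> (forall A : {set 'I_n}, (d < aA a A)%N ->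
              (#|A| - 1 <= k0 * (aA a A - d))%N)
    & (forall A : {set 'I_n}, (d < aA a A)%N ->
              (#|A| - 1 <= k0 * (aA a A - d))%N)
       <-> equi_generated 0 (Soc_nonzero I) (Soc_generated_in I)].
Proof.
move=> I; rewrite {}/I.
rewrite aT in had hk0 hk0min.
have hn : 0 < n.
  case: (posnP n) => // h0; move: had; rewrite big1 // => i.
  by move=> _; have := ltn_ord i; rewrite {2}h0.
pose i0 := Ordinal hn.
have nzk : forall m, 0 < m -> (exists u, Gm a d m u) <-> k0 <= m.
  move=> m hm; rewrite (nz_iff ha hd hm had); split => h.
    exact: hk0min.
  apply: leq_trans hk0 _; exact: leq_mul.
have E1 : equi_generated 0 (Soc_nonzero (@veronese_ideal K n a d))
    (Soc_generated_in (@veronese_ideal K n a d)) <->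
    (forall m, k0 <= m -> Gen a d m k0).
  rewrite -(F8 K a hd i0 hk0pos); apply: equi_char => //.
  - by apply/(F5 K a hd _ i0); split => //; apply/nzk.
  - move=> i _ hi /(F5 K a hd _ i0) [hi0 /(nzk _ hi0)]; lia.
  - by move=> i _ /(F5 K a hd _ i0) [hi0 /(nzk _ hi0)].
have E2 : equi_generated 1 (SocStar_nonzero (@veronese_ideal K n a d) d)
    (SocStar_generated_in (@veronese_ideal K n a d) d) <->
    (forall m, k0 <= m -> Gen a d m k0).
  rewrite -(F7 K a hd hk0pos); apply: equi_char => //.
  - by apply/(F6 K a hd hk0pos); apply/nzk.
  - move=> i hi1 hi /(F6 K a hd hi1) /(nzk _ hi1); lia.
  - by move=> i hi1 /(F6 K a hd hi1) /(nzk _ hi1).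
have E3 : cond3 a d k0 <-> (forall m, k0 <= m -> Gen a d m k0).
  split; first by move=> hc m hm; apply: gen_of_cond.
  move=> hg; apply: NNPP => hc.
  have [m hm hng] := not_gen_of_not_cond ha hd hk0pos hc.
  by apply: hng; apply: hg.
rewrite /cond3 in E3.
split.
- by rewrite E1 E2.
- by rewrite E2 E3.
- by rewrite E3 E1.
Qed.
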